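(* Let $(A,P)$ be a complete filtered Rota--Baxter algebra of weight zero over a field $\mathbb{K}$ of characteristic zero, and let $a\in A_1$. Let $\chi_0:A_1\to A_1$ be the weight zero BCH-recursion, i.e. the map determined by $$\chi_0(a)=-\frac{\mathrm{ad}\,P(\chi_0(a))}{1-e^{\mathrm{ad}\,P(\chi_0(a))}}(a)=\sum_{n\ge0}\frac{B_n}{n!}\big(\mathrm{ad}\,P(\chi_0(a))\big)^n(a),$$ where $B_n$ are the Bernoulli numbers ($B_0=1$, $B_1=-1/2$, $B_2=1/6,\dots$) and $\mathrm{ad}\,u(v)=uv-vu$. Then: (1) the equation $x=1-P(x\,a)$ has the unique solution $x=\exp\big(-P(\chi_0(a))\big)$; (2) the equation $y=1+P(a\,y)$ has the unique solution $y=\exp\big(P(\chi_0(a))\big)$.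
   Context: A Rota--Baxter algebra of weight zero is an associative algebra $A$ with a linear map $P$ satisfying $P(x)P(y)=P(xP(y))+P(P(x)y)$ for all $x,y\in A$. A complete filtered Rota--Baxter algebra is one with a decreasing filtration $A=A_0\supseteq A_1\supseteq\cdots$ by ideals $A_n$ with $P(A_n)\subseteq A_n$, $A_mA_n\subseteq A_{m+n}$, and $A\cong\varprojlim A/A_n$. The map $\chi_0$ is the unique map $A_1\to A_1$ satisfying the displayed equation (determined inductively with respect to the filtration). *)

(* Defs.v *)
From HB Require Import structures.
From mathcomp Require Import all_boot all_order all_algebra.
Set Implicit Arguments. Unset Strict Implicit. Unset Printing Implicit Defensive.
Import Order.TTheory GRing.Theory Num.Theory.
Local Open Scope ring_scope.

(* Bernoulli numbers (convention B_1 = -1/2), via the standard recurrence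
   B_0 = 1,  B_n = -1/(n+1) * sum_{k<n} C(n+1,k) B_k. *)
Fixpoint bern_list (n : nat) : seq rat :=
  match n with
  | 0 => [:: 1]
  | n'.+1 => let l := bern_list n' in
      rcons l (- (n'.+2%:R)^-1 * \sum_(k < n'.+1) ('C(n'.+2, k))%:R * l`_k)
  end.
Definition bernoulli (n : nat) : rat := (bern_list n)`_n.

Section Filtered.
Variables (K : fieldType) (A : algType K).

(* The filtration A = A_0 ⊇ A_1 ⊇ ... is given by predicates F n. *)

Definition is_ideal (I : A -> Prop) : Prop :=
  [/\ I 0, (forall x y, I x -> I y -> I (x + y)),
      (forall (k : K) x, I x -> I (k *: x)),
      (forall x y, I y -> I (x * y)) & (forall x y, I x -> I (x * y))].

Definition fconverges (F : nat -> A -> Prop) (s : nat -> A) (L : A) : Prop :=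
  forall n, exists N, forall m, (N <= m)%N -> F n (L - s m).

Definition fseries (F : nat -> A -> Prop) (u : nat -> A) (L : A) : Prop :=
  fconverges F (fun N => \sum_(k < N) u k) L.

(* Completeness A ≅ lim A/A_n : the canonical map is injective (separated)
   and surjective (every compatible sequence, i.e. s (n+1) ≡ s n mod A_n,
   lifts to an element L with L ≡ s n mod A_n for all n). *)
Definition complete_filtered_RB0 (F : nat -> A -> Prop) (P : A -> A) : Prop :=
  [/\
      (forall x y, P x * P y = P (x * P y) + P (P x * y)),
      [/\ (forall x, F 0 x), (forall n x, F n.+1 x -> F n x) &
          (forall n, is_ideal (F n))],
      (forall n x, F n x -> F n (P x)),
      (forall m n x y, F m x -> F n y -> F (m + n) (x * y)) &
      [/\ (forall x, (forall n, F n x) -> x = 0) &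
          (forall s : nat -> A, (forall n, F n (s n.+1 - s n)) ->
             exists L, forall n, F n (L - s n))]].

Definition ad (u v : A) : A := u * v - v * u.

Definition exp_term (u : A) (k : nat) : A := ((k`!)%:R)^-1 *: u ^+ k.

Definition bch0_term (u b : A) (n : nat) : A :=
  (ratr (bernoulli n) / (n`!)%:R) *: iter n (ad u) b.

End Filtered.

(* Main.v *)
Require Import Defs.
From HB Require Import structures.
From mathcomp Require Import all_boot all_order all_algebra.
Set Implicit Arguments. Unset Strict Implicit. Unset Printing Implicit Defensive.
Import Order.TTheory GRing.Theory Num.Theory.
Local Open Scope ring_scope.

Lemma tri_sum (V : nmodType) (f : nat -> nat -> V) N :
  \sum_(0 <= n < N) \sum_(0 <= m < n.+1) f m (n - m)%N =
  \sum_(0 <= m < N) \sum_(0 <= j < N - m) f m j.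
Proof.
elim: N => [|N IH]; first by rewrite !big_geq.
rewrite big_nat_recr //= IH.
rewrite [RHS](@eq_big_nat _ _ _ 0 N.+1 _ (fun m => \sum_(0 <= j < N - m) f m j + f m (N - m)%N)); last first.
  by move=> m /andP[_ mN]; rewrite subSn // big_nat_recr.
by rewrite big_split /= [X in _ = X + _]big_nat_recr //= subnn (@big_geq _ _ _ 0 0) // addr0.
Qed.

Section Alg.
Variables (K : fieldType) (A : algType K).

Lemma rb_pow (P : {linear A -> A}) :
  (forall x y, P x * P y = P (x * P y) + P (P x * y)) ->
  forall x n, P x ^+ n.+1 = P (\sum_(0 <= k < n.+1) P x ^+ k * x * P x ^+ (n - k)).
Proof.
move=> RB x; elim=> [|n IH]; first by rewrite big_nat1 !expr0 expr1 mul1r mulr1.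
rewrite exprSr {1}IH RB -IH -linearD; congr (P _).
rewrite [RHS]big_nat_recr //= subnn expr0 mulr1; congr (_ + _).
rewrite big_distrl /=; apply: eq_big_nat => k /andP[_ kn].
by rewrite subSn // exprSr mulrA.
Qed.

Lemma S_expand (u X : A) n :
  \sum_(0 <= k < n.+1) u ^+ k * X * u ^+ (n - k) =
  \sum_(0 <= m < n.+1) (iter m (ad u) X * u ^+ (n - m)) *+ 'C(n.+1, m.+1).
Proof.
elim: n => [|n IH]; first by rewrite !big_nat1 /= expr0 mul1r.
rewrite big_nat_recl // expr0 mul1r subn0.
have -> : \sum_(0 <= k < n.+1) u ^+ k.+1 * X * u ^+ (n.+1 - k.+1) =
          u * \sum_(0 <= k < n.+1) u ^+ k * X * u ^+ (n - k).
  by rewrite mulr_sumr; apply: eq_bigr => k _; rewrite subSS exprS !mulrA.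
rewrite IH mulr_sumr.
have -> : \sum_(0 <= i < n.+1) u * ((iter i (ad u) X * u ^+ (n - i)) *+ 'C(n.+1, i.+1)) =
  \sum_(0 <= i < n.+1) (iter i.+1 (ad u) X * u ^+ (n - i)) *+ 'C(n.+1, i.+1) +
  \sum_(0 <= i < n.+1) (iter i (ad u) X * u ^+ (n.+1 - i)) *+ 'C(n.+1, i.+1).
  rewrite -big_split /=; apply: eq_big_nat => i /andP[_ iN].
  rewrite mulrnAr -mulrnDl; congr (_ *+ _).
  rewrite /= subSn // exprS; set Y := iter i _ X.
  by rewrite /ad mulrBl !mulrA subrK.
have -> : \sum_(0 <= m < n.+2) (iter m (ad u) X * u ^+ (n.+1 - m)) *+ 'C(n.+2, m.+1) =
  \sum_(0 <= m < n.+2) ((iter m (ad u) X * u ^+ (n.+1 - m)) *+ 'C(n.+1, m.+1) + (iter m (ad u) X * u ^+ (n.+1 - m)) *+ 'C(n.+1, m)).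
  by apply: eq_bigr => m _; rewrite binS mulrnDr.
rewrite big_split /= [X in _ = X + _]big_nat_recr //= bin_small // mulr0n addr0.
rewrite [X in _ = _ + X]big_nat_recl //= bin0 mulr1n subn0.
rewrite [RHS]addrC addrA; congr (_ + _ + _).
Qed.

End Alg.

Lemma size_bern n : size (bern_list n) = n.+1.
Proof. by elim: n => //= n IH; rewrite size_rcons IH. Qed.

Lemma nth_bern n k : (k <= n)%N -> (bern_list n)`_k = bernoulli k.
Proof.
elim: n => [|n IH]; first by rewrite leqn0 => /eqP ->.
rewrite leq_eqVlt => /orP[/eqP -> //|kn].
by rewrite /= nth_rcons size_bern kn IH.
Qed.

Lemma bern_rec n : bernoulli n.+1 =
  - (n.+2%:R)^-1 * \sum_(k < n.+1) ('C(n.+2, k))%:R * bernoulli k.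
Proof.
rewrite /bernoulli /= nth_rcons size_bern ltnn eqxx; congr (_ * _).
by apply: eq_bigr => k _; rewrite (@nth_bern n k (ltn_ord k)).
Qed.

Lemma bern_sum n : \sum_(0 <= j < n.+1) ('C(n.+1, j))%:R * bernoulli j = (n == 0)%:R :> rat.
Proof.
case: n => [|n]; first by rewrite big_nat1 /bernoulli /= mul1r.
rewrite big_nat_recr //= bern_rec binSn big_mkord.
set S := \sum_(k < n.+1) _.
rewrite mulrA mulrN mulfV ?mulN1r ?subrr //.
by rewrite pnatr_eq0.
Qed.

From mathcomp Require Import ring zify.

Lemma fact_neq0 (K : fieldType) : [pchar K] =i pred0 -> forall k, (k`!%:R : K) != 0.
Proof. by move=> ch k; rewrite ((pcharf0P _).1 ch) -lt0n fact_gt0. Qed.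

Lemma fact_bin (K : fieldType) : [pchar K] =i pred0 -> forall N j, (j <= N)%N ->
  ('C(N, j)%:R : K) / (N`!)%:R = ((j`!)%:R)^-1 * (((N - j)`!)%:R)^-1.
Proof.
move=> ch N j jN; rewrite -(bin_fact jN) !natrM.
have h1 := fact_neq0 ch j; have h2 := fact_neq0 ch (N - j).
have h3 : ('C(N, j)%:R : K) != 0 by rewrite ((pcharf0P _).1 ch) -lt0n bin_gt0.
by field; rewrite h1 h2 h3.
Qed.

Section Ratr.
Variable K : fieldType.
Hypothesis ch : [pchar K] =i pred0.

Lemma nz_den_K (x : rat) : (denq x)%:~R != 0 :> K.
Proof.
case: (denq x) (denq_gt0 x) => [k|k] //= kpos.
by rewrite ((pcharf0P _).1 ch); rewrite -lt0n.
Qed.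

Lemma ratrB_K (x y : rat) : ratr (x - y) = ratr x - ratr y :> K.
Proof.
have injZtoQ: @injective rat int intr by apply: intr_inj.
have nz_den := nz_den_K.
apply: (canLR (mulfK (nz_den _))); apply: (mulIf (nz_den x)).
rewrite mulrAC mulrBl divfK ?nz_den // mulrAC -!rmorphM.
apply: (mulIf (nz_den y)); rewrite mulrAC mulrBl divfK ?nz_den //.
rewrite -!(rmorphM, rmorphB); congr _%:~R; apply: injZtoQ.
rewrite !(rmorphM, rmorphB) /= [_ - _]lock /= -lock !numqE.
by rewrite (mulrAC y) -!mulrBl -mulrA mulrAC !mulrA.
Qed.

Lemma ratr0_K : ratr 0 = 0 :> K.
Proof. by rewrite (_ : 0 = 0%:~R) // ratr_int. Qed.

Lemma ratrD_K (x y : rat) : ratr (x + y) = ratr x + ratr y :> K.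
Proof.
have hN z : ratr (- z) = - ratr z :> K by rewrite -sub0r ratrB_K ratr0_K sub0r.
by have := ratrB_K x (- y); rewrite opprK hN opprK.
Qed.

Lemma ratr_sum_K (I : Type) (r : seq I) (Pr : pred I) (f : I -> rat) :
  ratr (\sum_(i <- r | Pr i) f i) = \sum_(i <- r | Pr i) (ratr (f i) : K).
Proof. exact: (big_morph _ ratrD_K ratr0_K). Qed.

Lemma ratr_natmul_K n (x : rat) : ratr (n%:R * x) = n%:R * ratr x :> K.
Proof.
elim: n => [|n IH]; first by rewrite !mul0r ratr0_K.
by rewrite -addn1 !natrD !mulrDl ratrD_K IH !mul1r.
Qed.
End Ratr.

Section Main.
Variables (K : fieldType) (A : algType K) (F : nat -> A -> Prop).
Hypothesis ch : [pchar K] =i pred0.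
Hypothesis Fall0 : forall x, F 0 x.
Hypothesis Fdec : forall n x, F n.+1 x -> F n x.
Hypothesis Fid : forall n, is_ideal (F n).
Hypothesis Fmul : forall m n x y, F m x -> F n y -> F (m + n) (x * y).
Hypothesis Fsep : forall x, (forall n, F n x) -> x = 0.
Hypothesis Fcomp : forall s : nat -> A, (forall n, F n (s n.+1 - s n)) ->
  exists L, forall n, F n (L - s n).

Local Notation fi n := (((n`!)%:R : K)^-1).

Lemma F0 n : F n 0. Proof. by have [] := Fid n. Qed.
Lemma FD n x y : F n x -> F n y -> F n (x + y). Proof. by case: (Fid n) => _ H _ _ _; apply: H. Qed.
Lemma FZ n k x : F n x -> F n (k *: x). Proof. by case: (Fid n) => _ _ H _ _; apply: H. Qed.
Lemma FN n x : F n x -> F n (- x).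
Proof. by move=> Hx; rewrite -scaleN1r; apply: FZ. Qed.
Lemma FB n x y : F n x -> F n y -> F n (x - y).
Proof. by move=> Hx Hy; apply: FD => //; apply: FN. Qed.
Lemma FMl n x y : F n y -> F n (x * y). Proof. by case: (Fid n) => _ _ _ H _; apply: H. Qed.
Lemma FMr n x y : F n x -> F n (x * y). Proof. by case: (Fid n) => _ _ _ _ H; apply: H. Qed.
Lemma Fmono m n x : (m <= n)%N -> F n x -> F m x.
Proof.
move=> /subnK <-; elim: (n - m)%N => // k IH Hx.
by apply: IH; apply: Fdec; rewrite -addSn.
Qed.
Lemma Fsum n (I : Type) (r : seq I) (Pr : pred I) (f : I -> A) :
  (forall i, Pr i -> F n (f i)) -> F n (\sum_(i <- r | Pr i) f i).
Proof. by move=> H; apply: (big_ind (F n)) => //; [apply: F0| apply: FD]. Qed.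
Lemma Fexp u k : F 1 u -> F k (u ^+ k).
Proof.
move=> Hu; elim: k => [|k IH]; first by apply: Fall0.
by rewrite exprS -add1n; apply: Fmul.
Qed.

Lemma Fsum_nat n a b (f : nat -> A) : (forall i, (n <= i)%N -> F i (f i)) ->
  (n <= a)%N -> F n (\sum_(a <= i < b) f i).
Proof.
move=> H na; rewrite big_nat_cond; apply: Fsum => i /andP[/andP[ai _] _].
apply: (@Fmono n i); first exact: leq_trans ai.
by apply: H; apply: leq_trans ai.
Qed.

Lemma series_tail t L : (forall k, F k (t k)) -> fseries F t L ->
  forall N, F N (L - \sum_(0 <= k < N) t k).
Proof.
move=> Ht HL N; have [M HM] := HL N.
have := HM (maxn M N) (leq_maxl _ _).
rewrite -(big_mkord xpredT) (@big_cat_nat _ _ _ N) ?leq_maxr //= => H.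
have H2 : F N (\sum_(N <= k < maxn M N) t k) by apply: Fsum_nat.
have -> : L - \sum_(0 <= k < N) t k =
   (L - (\sum_(0 <= k < N) t k + \sum_(N <= k < maxn M N) t k)) +
   \sum_(N <= k < maxn M N) t k.
  by rewrite opprD addrA subrK.
exact: FD.
Qed.

Lemma series_ex t : (forall k, F k (t k)) -> exists L, fseries F t L.
Proof.
move=> Ht; have [L HL] : exists L, forall n, F n (L - \sum_(k < n) t k).
  by apply: Fcomp => n; rewrite big_ord_recr /= addrAC subrr add0r.
exists L => n; exists n => m nm; exact: Fmono nm (HL m).
Qed.

Lemma ad_F n u x : F n x -> F n (ad u x).
Proof. by move=> Hx; rewrite /ad; apply: FB; [apply: FMl | apply: FMr]. Qed.

Lemma iter_ad_F n m u x : F n x -> F n (iter m (ad u) x).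
Proof. by move=> Hx; elim: m => //= m IH; apply: ad_F. Qed.

Lemma iter_ad_F1 k m u x : F 1 u -> F k x -> F (m + k) (iter m (ad u) x).
Proof.
move=> Hu Hx; elim: m => //= m IH; rewrite /ad; apply: FB.
  by have -> : (m.+1 + k = 1 + (m + k))%N by []; apply: Fmul.
have -> : (m.+1 + k = (m + k) + 1)%N by rewrite addn1.
by apply: Fmul.
Qed.

Lemma adD (u x y : A) : ad u (x + y) = ad u x + ad u y.
Proof. by rewrite /ad mulrDr mulrDl opprD addrACA. Qed.
Lemma adZ (u : A) (c : K) (x : A) : ad u (c *: x) = c *: ad u x.
Proof. by rewrite /ad -scalerAr -scalerAl scalerBr. Qed.
Lemma ad0 (u : A) : ad u 0 = 0.
Proof. by rewrite /ad mulr0 mul0r subrr. Qed.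
Lemma iter_adD m (u x y : A) : iter m (ad u) (x + y) = iter m (ad u) x + iter m (ad u) y.
Proof. by elim: m => //= m ->; rewrite adD. Qed.
Lemma iter_adZ m (u : A) (c : K) (x : A) : iter m (ad u) (c *: x) = c *: iter m (ad u) x.
Proof. by elim: m => //= m ->; rewrite adZ. Qed.
Lemma iter_ad0 m (u : A) : iter m (ad u) 0 = 0.
Proof. by elim: m => //= m ->; rewrite ad0. Qed.
Lemma iter_ad_sum m (u : A) (I : Type) (r : seq I) (Pr : pred I) (f : I -> A) :
  iter m (ad u) (\sum_(i <- r | Pr i) f i) = \sum_(i <- r | Pr i) iter m (ad u) (f i).
Proof. exact: (big_morph _ (iter_adD m u) (iter_ad0 m u)). Qed.


Lemma Ftrans n x y z : F n (x - y) -> F n (y - z) -> F n (x - z).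
Proof.
move=> h1 h2; have -> : x - z = (x - y) + (y - z) by rewrite addrA subrK.
exact: FD.
Qed.

Lemma sq_tri (f : nat -> nat -> A) N : (forall m j, (N <= m + j)%N -> F N (f m j)) ->
  F N (\sum_(0 <= m < N) \sum_(0 <= j < N) f m j -
       \sum_(0 <= n < N) \sum_(0 <= m < n.+1) f m (n - m)%N).
Proof.
move=> Hf; rewrite tri_sum -sumrB; apply: Fsum => // m _.
rewrite (@big_cat_nat _ _ _ (N - m) 0 N) ?leq_subr //= addrAC subrr add0r.
rewrite big_nat_cond; apply: Fsum => // j /andP[/andP[jm _] _]; apply: Hf.
by rewrite -(leq_add2l m) in jm; apply: leq_trans jm; rewrite -leq_subLR.
Qed.

Lemma series_unique t L1 L2 : fseries F t L1 -> fseries F t L2 -> L1 = L2.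
Proof.
move=> h1 h2; apply/eqP; rewrite -subr_eq0; apply/eqP; apply: Fsep => n.
have [M1 HM1] := h1 n; have [M2 HM2] := h2 n.
apply: (Ftrans (y := \sum_(k < maxn M1 M2) t k)); first by apply: HM1; apply: leq_maxl.
rewrite -opprB; apply: FN => //; apply: HM2; apply: leq_maxr.
Qed.

Lemma zero_ind d : (forall n, F n d -> F n.+1 d) -> d = 0.
Proof. by move=> H; apply: Fsep; elim=> // n; apply: H. Qed.

Lemma exp_term_F (v : A) k : F 1 v -> F k (exp_term v k).
Proof. by move=> Hv; apply: FZ => //; apply: Fexp. Qed.

Lemma exp_ex (v : A) : F 1 v -> exists L, fseries F (exp_term v) L.
Proof. by move=> Hv; apply: series_ex => // k; apply: exp_term_F. Qed.

Lemma exprN_scale (v : A) j : (- v) ^+ j = ((-1) ^+ j : K) *: v ^+ j.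
Proof.
elim: j => [|j IH]; first by rewrite !expr0 scale1r.
by rewrite !exprS IH mulN1r scaleNr mulNr -scalerAr.
Qed.

Lemma sum_bin_sign n : \sum_(0 <= j < n.+1) (('C(n, j))%:R * (-1) ^+ j : K) = (n == 0)%:R.
Proof.
have := exprDn (1 : K) (-1) n; rewrite subrr expr0n => ->.
rewrite -(big_mkord xpredT (fun i => 1 ^+ (n - i) * (-1) ^+ i *+ 'C(n, i))).
by apply: eq_bigr => i _; rewrite expr1n mul1r mulr_natl.
Qed.

Lemma exp_inv (v Lv Lw : A) : F 1 v -> fseries F (exp_term v) Lv ->
  fseries F (exp_term (- v)) Lw -> Lv * Lw = 1.
Proof.
move=> Hv hv hw; apply/eqP; rewrite -subr_eq0; apply/eqP; apply: Fsep => N.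
case: N => [|N]; first exact: Fall0.
set M := N.+1.
have Hv' : F 1 (- v) by apply: FN.
have t1 := series_tail (fun k => exp_term_F k Hv) hv M.
have t2 := series_tail (fun k => exp_term_F k Hv') hw M.
set Ev := \sum_(0 <= k < M) exp_term v k in t1.
set Ew := \sum_(0 <= k < M) exp_term (- v) k in t2.
apply: (Ftrans (y := Ev * Ew)).
  have -> : Lv * Lw - Ev * Ew = (Lv - Ev) * Lw + Ev * (Lw - Ew).
    by rewrite mulrBl mulrBr addrA subrK.
  by apply: FD; [apply: FMr | apply: FMl].
have -> : Ev * Ew = \sum_(0 <= j < M) \sum_(0 <= m < M) exp_term v m * exp_term (- v) j.
  rewrite /Ev /Ew big_distrl /= exchange_big /=; apply: eq_bigr => j _.
  by rewrite big_distrr /=; apply: eq_bigr => m _.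
apply: (Ftrans (y := \sum_(0 <= n < M) \sum_(0 <= j < n.+1) exp_term v (n - j)%N * exp_term (- v) j)).
  apply: (@sq_tri (fun j m => exp_term v m * exp_term (- v) j)) => j m jm.
  apply: (@Fmono _ (m + j)); first by rewrite addnC.
  by apply: Fmul; apply: exp_term_F.
have -> : \sum_(0 <= n < M) \sum_(0 <= j < n.+1) exp_term v (n - j)%N * exp_term (- v) j
   = \sum_(0 <= n < M) ((fi n * (n == 0)%:R) *: v ^+ n).
  apply: eq_bigr => n _; rewrite -sum_bin_sign mulr_sumr scaler_suml.
  apply: eq_big_nat => j /andP[_ jn].
  rewrite /exp_term exprN_scale -scalerAr -scalerAl scalerA -scalerAr scalerA -exprD subnK //.
  by congr (_ *: _); rewrite [RHS]mulrA [_ * 'C(n, j)%:R]mulrC fact_bin.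
rewrite big_nat_recl // big1 ?addr0; last by move=> i _; rewrite mulr0 scale0r.
by rewrite /= mulr1 invr1 scale1r expr0 subrr; apply: F0.
Qed.


Lemma iter_adB m (u x y : A) : iter m (ad u) (x - y) = iter m (ad u) x - iter m (ad u) y.
Proof. by rewrite iter_adD -scaleN1r iter_adZ scaleN1r. Qed.

Variable P : {linear A -> A}.
Hypothesis RB : forall x y, P x * P y = P (x * P y) + P (P x * y).
Hypothesis FP : forall n x, F n x -> F n (P x).

Lemma a_approx (a Om : A) : F 1 a -> F 1 Om -> fseries F (bch0_term (P Om) a) Om ->
  forall N, F N (a - \sum_(0 <= m < N) fi m.+1 *: iter m (ad (P Om)) Om).
Proof.
move=> Ha HO Hs N; set u := P Om; have Hu : F 1 u := FP HO.
have Hb k : F k (bch0_term u a k).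
  apply: FZ; apply: (@Fmono k (k + 1)); first exact: leq_addr.
  exact: iter_ad_F1.
have t := series_tail Hb Hs N.
set B := \sum_(0 <= k < N) bch0_term u a k in t.
apply: (Ftrans (y := \sum_(0 <= m < N) fi m.+1 *: iter m (ad u) B)); last first.
  rewrite -sumrB; apply: Fsum => m _; rewrite -scalerBr -iter_adB.
  by apply: FZ; apply: iter_ad_F; rewrite -opprB; apply: FN.
have -> : \sum_(0 <= m < N) fi m.+1 *: iter m (ad u) B =
  \sum_(0 <= j < N) \sum_(0 <= m < N)
     (fi m.+1 * (ratr (bernoulli j) / (j`!)%:R)) *: iter (m + j) (ad u) a.
  rewrite exchange_big /=; apply: eq_bigr => m _.
  rewrite /B iter_ad_sum scaler_sumr; apply: eq_bigr => j _.
  by rewrite /bch0_term iter_adZ scalerA iterD.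
apply: (Ftrans (y := \sum_(0 <= n < N) \sum_(0 <= j < n.+1)
     (fi (n - j)%N.+1 * (ratr (bernoulli j) / (j`!)%:R)) *: iter ((n - j)%N + j) (ad u) a)); last first.
  rewrite -opprB; apply: FN.
  apply: (@sq_tri (fun j m => (fi m.+1 * (ratr (bernoulli j) / (j`!)%:R)) *: iter (m + j) (ad u) a)).
  move=> j m jm; apply: FZ; apply: (@Fmono _ (m + j + 1)).
    by move: jm; clear; lia.
  exact: iter_ad_F1.
have -> : \sum_(0 <= n < N) \sum_(0 <= j < n.+1)
     (fi (n - j)%N.+1 * (ratr (bernoulli j) / (j`!)%:R)) *: iter ((n - j)%N + j) (ad u) a
   = \sum_(0 <= n < N) (fi n.+1 * (n == 0)%:R) *: iter n (ad u) a.
  apply: eq_bigr => n _.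
  under eq_big_nat => j /andP[_ jn] do rewrite subnK //.
  rewrite -scaler_suml; congr (_ *: _).
  have -> : ((n == 0)%:R : K) = ratr ((n == 0)%:R) by rewrite ratr_nat.
  rewrite -(bern_sum n) ratr_sum_K // mulr_sumr.
  apply: eq_big_nat => j /andP[_ jn].
  rewrite ratr_natmul_K // [RHS]mulrA [_ * 'C(_, _)%:R]mulrC fact_bin //; last exact: leqW.
  have -> : (n.+1 - j = (n - j).+1)%N by rewrite subSn.
  by ring.
destruct N as [|N]; first exact: Fall0.
rewrite big_nat_recl // big1 ?addr0; last by move=> i _; rewrite mulr0 scale0r.
by rewrite /= invr1 mulr1 scale1r subrr; apply: F0.
Qed.


Lemma exp_sol (a Om E : A) : F 1 a -> F 1 Om -> fseries F (bch0_term (P Om) a) Om ->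
  fseries F (exp_term (P Om)) E -> E = 1 + P (a * E).
Proof.
move=> Ha HO Hs HE; apply/eqP; rewrite -subr_eq0; apply/eqP; apply: Fsep => N.
set u := P Om; have Hu : F 1 u := FP HO.
have Hu' k : F k (exp_term u k) by apply: exp_term_F.
have hE1 : F N (E - \sum_(0 <= k < N.+1) exp_term u k).
  exact: (@Fmono N N.+1) (series_tail Hu' HE N.+1).
have hE := series_tail Hu' HE N.
have hA := a_approx Ha HO Hs N.
set h := fun m j => (fi m.+1 * fi j) *: (iter m (ad u) Om * u ^+ j).
set T := \sum_(0 <= n < N) \sum_(0 <= m < n.+1) h m (n - m)%N.
have eqE : \sum_(0 <= k < N.+1) exp_term u k = 1 + P T.
  rewrite big_nat_recl // /exp_term /= invr1 scale1r expr0; congr (_ + _).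
  rewrite /T linear_sum; apply: eq_bigr => n _.
  rewrite rb_pow // -linearZ /= S_expand scaler_sumr; congr (P _).
  apply: eq_big_nat => m /andP[_ mn]; rewrite /h -scaler_nat scalerA.
  congr (_ *: _); rewrite mulrC fact_bin //.
apply: (Ftrans (y := 1 + P T)); first by rewrite -eqE.
rewrite opprD addrACA subrr add0r -linearB; apply: FP.
set Am := \sum_(0 <= m < N) fi m.+1 *: iter m (ad u) Om in hA.
set EN := \sum_(0 <= k < N) exp_term u k in hE.
apply: (Ftrans (y := \sum_(0 <= m < N) \sum_(0 <= j < N) h m j)).
  rewrite -opprB; apply: FN; apply: sq_tri => m j mj.
  apply: FZ; apply: (@Fmono _ (m + j)) => //; apply: Fmul => //; last exact: Fexp.
  by apply: (@Fmono _ (m + 1)); [exact: leq_addr | exact: iter_ad_F1].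
have -> : \sum_(0 <= m < N) \sum_(0 <= j < N) h m j = Am * EN.
  rewrite /Am /EN big_distrl; apply: eq_bigr => m _; rewrite big_distrr.
  by apply: eq_bigr => j _; rewrite /h /exp_term /= -scalerAl -scalerAr scalerA.
have -> : Am * EN - a * E = (Am - a) * EN + a * (EN - E) by rewrite mulrBl mulrBr addrA subrK.
by apply: FD; [apply: FMr; rewrite -opprB; apply: FN | apply: FMl; rewrite -opprB; apply: FN].
Qed.


Lemma grp_id (p x q r : A) : - p + (x + (q - x) + r) = q - p + r.
Proof. by rewrite [x + _]addrC subrK addrCA addrA. Qed.

Lemma exp_sol_left (a E X : A) : F 1 a -> E = 1 + P (a * E) -> X * E = 1 -> E * X = 1 ->
  X = 1 - P (X * a).
Proof.
move=> Ha hE hXE hEX.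
set w := X - 1 + P (X * a).
have pe : P (a * E) = E - 1 by rewrite {2}hE addrAC subrr add0r.
have key : w * E = P (w * a * E).
  have e1 : P (X * a) * E = P (X * a) + P (X * a * (E - 1)) + P (P (X * a) * (a * E)).
    by rewrite {1}hE mulrDr mulr1 RB pe addrA.
  rewrite /w [LHS]mulrDl [(X - 1) * E]mulrDl mulN1r hXE e1.
  have -> : 1 - E = - P (a * E) by rewrite pe opprB.
  have -> : (X - 1 + P (X * a)) * a * E = (X * a * E - a * E) + P (X * a) * (a * E).
    by rewrite !mulrDl !mulNr !mul1r mulrA.
  by rewrite mulrBr mulr1 !linearD !linearN /= grp_id.
have q0 : w * E = 0.
  apply: zero_ind => n Hn; rewrite key; apply: FP.
  have -> : w * a * E = w * E * X * a * E by rewrite -(mulrA w E X) hEX mulr1.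
  apply: FMr; rewrite -addn1; apply: Fmul => //; exact: FMr.
have : w = 0 by rewrite -[w]mulr1 -hEX mulrA q0 mul0r.
rewrite /w addrAC => /eqP; rewrite subr_eq0 => /eqP <-.
by rewrite addrK.
Qed.

Lemma uniq_right (a y1 y2 : A) : F 1 a -> y1 = 1 + P (a * y1) -> y2 = 1 + P (a * y2) -> y1 = y2.
Proof.
move=> Ha h1 h2; apply/eqP; rewrite -subr_eq0; apply/eqP; apply: zero_ind => n Hn.
have -> : y1 - y2 = P (a * (y1 - y2)).
  by rewrite mulrBr linearB /= {1}h1 {1}h2 opprD addrACA subrr add0r.
by apply: FP; rewrite -add1n; apply: Fmul.
Qed.

Lemma uniq_left (a y1 y2 : A) : F 1 a -> y1 = 1 - P (y1 * a) -> y2 = 1 - P (y2 * a) -> y1 = y2.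
Proof.
move=> Ha h1 h2; apply/eqP; rewrite -subr_eq0; apply/eqP; apply: zero_ind => n Hn.
have -> : y1 - y2 = - P ((y1 - y2) * a).
  by rewrite mulrBl linearB /= {1}h1 {1}h2 opprD addrACA subrr add0r opprK opprB addrC.
by apply: FN; apply: FP; rewrite -addn1; apply: Fmul.
Qed.

End Main.

Theorem lemma2p15 (K : fieldType) (A : algType K)
  (F : nat -> A -> Prop) (P : {linear A -> A}) (chi0 : A -> A) (a : A) :
  [pchar K] =i pred0 ->
  complete_filtered_RB0 F P ->
  (* chi0 : A_1 -> A_1 is the weight zero BCH-recursion *)
  (forall b, F 1 b ->
     F 1 (chi0 b) /\ fseries F (bch0_term (P (chi0 b)) b) (chi0 b)) ->
  F 1 a ->
  (exists x, fseries F (exp_term (- P (chi0 a))) x /\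
     x = 1 - P (x * a) /\ (forall x', x' = 1 - P (x' * a) -> x' = x)) /\
  (exists y, fseries F (exp_term (P (chi0 a))) y /\
     y = 1 + P (a * y) /\ (forall y', y' = 1 + P (a * y') -> y' = y)).
Proof.
move=> ch [RB [Fall0 Fdec Fid] FP Fmul [Fsep Fcomp]] Hchi Ha.
have [HO Hs] := Hchi a Ha.
have Hu : F 1 (P (chi0 a)) := FP _ _ HO.
have Hu' : F 1 (- P (chi0 a)) := FN Fid Hu.
have [E HE] := exp_ex Fall0 Fdec Fid Fmul Fcomp Hu.
have [X HX] := exp_ex Fall0 Fdec Fid Fmul Fcomp Hu'.
have hE := exp_sol ch Fall0 Fdec Fid Fmul Fsep RB FP Ha HO Hs HE.
have hEX := exp_inv ch Fall0 Fdec Fid Fmul Fsep Hu HE HX.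
have HE' : fseries F (exp_term (- - P (chi0 a))) E by rewrite opprK.
have hXE := exp_inv ch Fall0 Fdec Fid Fmul Fsep Hu' HX HE'.
have hX := exp_sol_left Fall0 Fid Fmul Fsep RB FP Ha hE hXE hEX.
split.
  exists X; split => //; split => // x' hx'.
  exact: (uniq_left Fall0 Fid Fmul Fsep FP Ha hx' hX).
exists E; split => //; split => // y' hy'.
exact: (uniq_right Fall0 Fmul Fsep FP Ha hy' hE).
Qed.
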